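(* Let $f$ be a homeomorphism of a compact metric space $(X,d)$ such that: (1) for every $\epsilon>0$ there is $\delta>0$ such that $d(a,b)<\delta$ implies $W^s_\epsilon(a)\cap W^u_\epsilon(b)\ne\emptyset$; and (2) for every $x\in X$ there is $c>0$ with $W^s_c(x)=\{x\}$. Then $X$ is finite.
   Context: $W^s_\epsilon(x)=\{y\in X: d(f^n(x),f^n(y))\le\epsilon\ \forall n\ge0\}$ and $W^u_\epsilon(x)=\{y\in X: d(f^{-n}(x),f^{-n}(y))\le\epsilon\ \forall n\ge0\}$. *)

(* Defs.v *)
From Stdlib Require Import Reals List.
Open Scope R_scope.

Definition is_metric {X : Type} (d : X -> X -> R) : Prop :=
  (forall x y, 0 <= d x y) /\
  (forall x y, d x y = 0 <-> x = y) /\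
  (forall x y, d x y = d y x) /\
  (forall x y z, d x z <= d x y + d y z).

Definition is_open {X : Type} (d : X -> X -> R) (U : X -> Prop) : Prop :=
  forall x, U x -> exists r, 0 < r /\ forall y, d x y < r -> U y.

Definition is_compact {X : Type} (d : X -> X -> R) : Prop :=
  forall (I : Type) (U : I -> X -> Prop),
    (forall i, is_open d (U i)) ->
    (forall x, exists i, U i x) ->
    exists l : list I, forall x, exists i, In i l /\ U i x.

Definition continuous_map {X : Type} (d : X -> X -> R) (f : X -> X) : Prop :=
  forall x eps, 0 < eps ->
    exists delta, 0 < delta /\ forall y, d x y < delta -> d (f x) (f y) < eps.

Definition homeo_with_inverse {X : Type} (d : X -> X -> R) (f g : X -> X) : Prop :=
  (forall x, g (f x) = x) /\ (forall x, f (g x) = x) /\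
  continuous_map d f /\ continuous_map d g.

Definition Ws {X : Type} (d : X -> X -> R) (f : X -> X) (eps : R) (x : X) : X -> Prop :=
  fun y => forall n : nat, d (Nat.iter n f x) (Nat.iter n f y) <= eps.

Definition Wu {X : Type} (d : X -> X -> R) (finv : X -> X) (eps : R) (x : X) : X -> Prop :=
  fun y => forall n : nat, d (Nat.iter n finv x) (Nat.iter n finv y) <= eps.

Definition finite_type (X : Type) : Prop := exists l : list X, forall x, In x l.

(* Main.v *)
Require Import Defs.
From Stdlib Require Import Reals List.
From Stdlib Require Import Lra Lia Classical ClassicalEpsilon Arith.
Open Scope R_scope.

Lemma php : forall N (h : nat -> nat), (forall k, (k <= N)%nat -> (h k < N)%nat) ->
  exists k k', (k < k' <= N)%nat /\ h k = h k'.
Proof.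
  induction N; intros h Hh.
  - specialize (Hh 0%nat (le_n 0)); lia.
  - destruct (classic (exists k, (k <= N)%nat /\ h k = h (S N))) as [[k [Hk E]]|Hno].
    + exists k, (S N); split; [lia|exact E].
    + assert (Hv: (h (S N) < S N)%nat) by (apply Hh; lia).
      destruct (IHN (fun k => if Nat.ltb (h k) (h (S N)) then h k else (h k - 1)%nat))
        as [k [k' [Hkk' E]]].
      * intros k Hk. assert (h k < S N)%nat by (apply Hh; lia).
        assert (h k <> h (S N)) by (intro; apply Hno; exists k; split; auto).
        destruct (Nat.ltb_spec (h k) (h (S N))); lia.
      * exists k, k'. split; [lia|].
        assert (h k <> h (S N)) by (intro; apply Hno; exists k; split; auto; lia).
        assert (h k' <> h (S N)) by (intro; apply Hno; exists k'; split; auto; lia).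
        destruct (Nat.ltb_spec (h k) (h (S N))); destruct (Nat.ltb_spec (h k') (h (S N))); lia.
Qed.

Lemma decode : forall a b a' b' L, (b < L)%nat -> (b' < L)%nat -> (a * L + b = a' * L + b')%nat -> a = a' /\ b = b'.
Proof.
  intros a b a' b' L Hb Hb' E.
  assert (a = a').
  { destruct (Nat.lt_trichotomy a a') as [H|[H|H]]; auto.
    - assert (S a * L <= a' * L)%nat by (apply Nat.mul_le_mono_r; lia). simpl in H0. lia.
    - assert (S a' * L <= a * L)%nat by (apply Nat.mul_le_mono_r; lia). simpl in H0. lia. }
  subst; lia.
Qed.

Lemma iter_gf : forall (X:Type) (f g : X->X), (forall x, g (f x) = x) ->
  forall k t x, Nat.iter k g (Nat.iter (k + t) f x) = Nat.iter t f x.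
Proof.
  intros X f g Hgf k. induction k; intros t x. reflexivity.
  rewrite Nat.iter_succ_r. replace (S k + t)%nat with (S (k + t)) by lia.
  rewrite Nat.iter_succ, Hgf. apply IHk.
Qed.

Lemma ball_open : forall (X:Type) (d : X -> X -> R), is_metric d ->
  forall (Q:Prop) z r, is_open d (fun u => Q /\ d z u < r).
Proof.
  intros X d [Hpos [Hzero [Hsym Htri]]] Q z r u [HQ Hu].
  exists (r - d z u). split; [lra|]. intros y Hy. split; auto.
  specialize (Htri z u y). lra.
Qed.

Theorem mainTheorem17 (X : Type) (d : X -> X -> R) (f g : X -> X)
  (Hmet : is_metric d) (Hcpt : is_compact d) (Hhomeo : homeo_with_inverse d f g)
  (H1 : forall eps, 0 < eps -> exists delta, 0 < delta /\
          forall a b, d a b < delta -> exists z, Ws d f eps a z /\ Wu d g eps b z)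
  (H2 : forall x, exists c, 0 < c /\ forall y, Ws d f c x y <-> y = x) :
  finite_type X.
Proof.
  pose proof Hmet as [Hpos [Hzero [Hsym Htri]]].
  destruct Hhomeo as [Hgf [Hfg _]].
  assert (HB : forall z0 e, 0 < e -> exists r, 0 < r /\ forall u, d z0 u < r ->
             forall k, d (Nat.iter k g z0) (Nat.iter k g u) <= e).
  { intros z0 e He. destruct (H2 z0) as [c' [Hc' Hw]].
    destruct (H1 (Rmin e c')) as [dl [Hdl Hp]]. apply Rmin_glb_lt; auto.
    exists dl. split; auto. intros u Hu k.
    destruct (Hp z0 u Hu) as [z [Hs Hu']].
    assert (z = z0). { apply Hw. intro n. specialize (Hs n).
      pose proof (Rmin_r e c'). lra. }
    subst z. specialize (Hu' k). rewrite Hsym. pose proof (Rmin_l e c'). lra. }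
  assert (Hiso : forall x, exists r, 0 < r /\ forall y, d x y < r -> y = x).
  { intro x. destruct (H2 x) as [c [Hc Hw]].
    destruct (HB x (c/2)) as [r [Hr Hrp]]; [lra|].
    exists r. split; auto. intros y Hy.
    apply NNPP. intro Hne.
    assert (Hnot : ~ Ws d f c x y) by (intro HW; apply Hne, Hw, HW).
    unfold Ws in Hnot. apply not_all_ex_not in Hnot. destruct Hnot as [m0 Hm0].
    apply Rnot_le_lt in Hm0.
    set (P := fun (p : X * R) => 0 < snd p /\ forall u', d (fst p) u' < snd p ->
                 forall k, d (Nat.iter k g (fst p)) (Nat.iter k g u') <= c/16).
    destruct (Hcpt (X * R)%type (fun p u => P p /\ d (fst p) u < snd p)) as [l Hl].
    { intros p. apply ball_open; auto. }
    { intros u. destruct (HB u (c/16)) as [ru [Hru Hrup]]; [lra|].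
      exists (u, ru). simpl. split. split; auto. rewrite (proj2 (Hzero u u) eq_refl). auto. }
    set (L := length l). set (s := S m0).
    assert (Hidx : forall w, exists i, (i < L)%nat /\ P (nth i l (x, 0)) /\
              d (fst (nth i l (x,0))) w < snd (nth i l (x,0))).
    { intro w. destruct (Hl w) as [p [Hin [HP Hd]]].
      destruct (In_nth l p (x,0) Hin) as [i [Hi E]]. exists i. rewrite E. auto. }
    set (hx := fun k => proj1_sig (constructive_indefinite_description _ (Hidx (Nat.iter (k*s) f x)))).
    set (hy := fun k => proj1_sig (constructive_indefinite_description _ (Hidx (Nat.iter (k*s) f y)))).
    assert (Hhx : forall k, (hx k < L)%nat /\ P (nth (hx k) l (x, 0)) /\
              d (fst (nth (hx k) l (x,0))) (Nat.iter (k*s) f x) < snd (nth (hx k) l (x,0))).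
    { intro k. unfold hx. destruct (constructive_indefinite_description _ _); simpl; auto. }
    assert (Hhy : forall k, (hy k < L)%nat /\ P (nth (hy k) l (x, 0)) /\
              d (fst (nth (hy k) l (x,0))) (Nat.iter (k*s) f y) < snd (nth (hy k) l (x,0))).
    { intro k. unfold hy. destruct (constructive_indefinite_description _ _); simpl; auto. }
    destruct (php (L*L) (fun k => hx k * L + hy k)%nat) as [k [k' [Hkk' E]]].
    { intros k _. destruct (Hhx k) as [A _]. destruct (Hhy k) as [B _]. nia. }
    assert (Ex : hx k = hx k' /\ hy k = hy k').
    { destruct (Hhx k) as [A _]. destruct (Hhy k) as [B _].
      destruct (Hhx k') as [A' _]. destruct (Hhy k') as [B' _]. exact (decode _ _ _ _ _ B B' E). }
    destruct Ex as [Ex Ey].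
    assert (Hclose : forall (hz : nat -> nat) (w : X), hz k = hz k' ->
        (forall k0, P (nth (hz k0) l (x, 0)) /\
              d (fst (nth (hz k0) l (x,0))) (Nat.iter (k0*s) f w) < snd (nth (hz k0) l (x,0))) ->
        forall n, d (Nat.iter n g (Nat.iter (k*s) f w)) (Nat.iter n g (Nat.iter (k'*s) f w)) <= c/8).
    { intros hz w Ez Hz n. destruct (Hz k) as [[Hp1 Hp2] Hd1]. destruct (Hz k') as [_ Hd2].
      rewrite <- Ez in Hd2.
      pose proof (Hp2 _ Hd1 n) as Q1. pose proof (Hp2 _ Hd2 n) as Q2.
      pose proof (Htri (Nat.iter n g (Nat.iter (k * s) f w)) (Nat.iter n g (fst (nth (hz k) l (x, 0))))
                   (Nat.iter n g (Nat.iter (k' * s) f w))) as Q3.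
      rewrite (Hsym (Nat.iter n g (Nat.iter (k * s) f w)) (Nat.iter n g (fst (nth (hz k) l (x, 0))))) in Q3. lra. }
    assert (Cx := Hclose hx x Ex (fun k0 => proj2 (Hhx k0))).
    assert (Cy := Hclose hy y Ey (fun k0 => proj2 (Hhy k0))).
    set (i := (k * s)%nat). set (j := (k' * s)%nat).
    assert (Hij : (j >= i + m0 + 1)%nat) by (unfold i, j, s; nia).
    set (t := (j - i - m0)%nat).
    assert (Key : forall w, Nat.iter (i + t) g (Nat.iter j f w) = Nat.iter m0 f w /\
                            Nat.iter (i + t) g (Nat.iter i f w) = Nat.iter t g w).
    { intro w. split.
      - replace j with ((i + t) + m0)%nat by (unfold t; lia). apply iter_gf; auto.
      - rewrite Nat.add_comm, Nat.iter_add. f_equal. pose proof (iter_gf X f g Hgf i 0 w) as Q. rewrite Nat.add_0_r in Q. exact Q. }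
    specialize (Cx (i + t)%nat). specialize (Cy (i + t)%nat).
    fold i j in Cx, Cy.
    destruct (Key x) as [K1 K2]. destruct (Key y) as [K3 K4].
    rewrite K1, K2 in Cx. rewrite K3, K4 in Cy.
    pose proof (Hrp y Hy t) as R1.
    pose proof (Htri (Nat.iter m0 f x) (Nat.iter t g x) (Nat.iter m0 f y)) as R2.
    pose proof (Htri (Nat.iter t g x) (Nat.iter t g y) (Nat.iter m0 f y)) as R3.
    rewrite (Hsym (Nat.iter m0 f x) (Nat.iter t g x)) in R2.
    lra. }
  destruct (Hcpt (X * R)%type (fun p u => (0 < snd p /\ forall u', d (fst p) u' < snd p -> u' = fst p)
                                 /\ d (fst p) u < snd p)) as [l Hl].
  { intros p. apply ball_open; auto. }
  { intros u. destruct (Hiso u) as [r [Hr Hrp]]. exists (u, r). simpl.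
    split. split; auto. rewrite (proj2 (Hzero u u) eq_refl). auto. }
  exists (map fst l). intro x. destruct (Hl x) as [p [Hin [[_ Hp] Hd]]].
  rewrite (Hp x Hd). apply in_map. auto.
Qed.
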